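(* Let $S$ be the set of positive integers $\ell$ for which there exists $n_0$ with $\Delta_\ell(n)>0$ for all $n\geq n_0$, and for each $\ell\in S$ let $n_0(\ell)$ be an integer such that $\Delta_\ell(n)>0$ for all $n\ge n_0(\ell)$. If $S$ is infinite, then the sequence $(n_0(\ell))_{\ell\in S}$ is unbounded.
   Context: For integers $n\geq 0$ let $S_n$ be the symmetric group on $n$ elements ($S_0$ trivial). For an integer $\ell\geq 1$ let $C_{\ell,n}=\{(\pi_1,\dots,\pi_\ell)\in S_n^\ell : \pi_j\pi_k=\pi_k\pi_j \text{ for all } 1\le j,k\le \ell\}$ and $N_\ell(n)=|C_{\ell,n}|/|S_n|$ (so $N_\ell(0)=1$). Define $\Delta_\ell(n)=N_\ell(n)^2-N_\ell(n-1)N_\ell(n+1)$ for $n\geq 1$. *)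

(* Defs.v *)
From HB Require Import structures.
From mathcomp Require Import all_boot all_order all_algebra all_fingroup.
Set Implicit Arguments. Unset Strict Implicit. Unset Printing Implicit Defensive.
Import GRing.Theory Num.Theory.
Local Open Scope ring_scope.

Definition commuting_tuples (l n : nat) : {set {ffun 'I_l -> {perm 'I_n}}} :=
  [set f : {ffun 'I_l -> {perm 'I_n}} |
     [forall j : 'I_l, forall k : 'I_l, ((f j * f k)%g == (f k * f j)%g)]].

Definition Ncomm (l n : nat) : rat :=
  (#|commuting_tuples l n|)%:R / (#|{perm 'I_n}|)%:R.

(* Delta_l(n) = N_l(n)^2 - N_l(n-1) N_l(n+1), meaningful for n >= 1. *)
Definition Delta (l n : nat) : rat :=
  Ncomm l n ^+ 2 - Ncomm l n.-1 * Ncomm l n.+1.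

Definition inS (l : nat) : Prop :=
  (0 < l)%N /\ exists n0 : nat, forall n : nat, (1 <= n)%N -> (n0 <= n)%N -> 0 < Delta l n.

(* Main.v *)
Require Import Defs.
From HB Require Import structures.
From mathcomp Require Import all_boot all_order all_algebra all_fingroup.
Set Implicit Arguments. Unset Strict Implicit. Unset Printing Implicit Defensive.
From mathcomp Require Import zify ring.
Import Order.TTheory GRing.Theory Num.Theory.
Fixpoint fM (n : nat) : nat :=
  match n with
  | 0 | 1 => 1 | 2 => 2 | 3 => 3 | 4 => 4
  | k.+3 => 3 * fM k
  end.

Lemma fM_S3 k : 2 <= k -> fM k.+3 = 3 * fM k.
Proof. by case: k => [|[|k]]. Qed.

Lemma fM_ge k : k <= fM k.
Proof.
elim: k {-2}k (leqnn k) => [|N IH] k hk; first by case: k hk.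
case: (ltnP k 5) => hk5.
  by case: k hk hk5 => [|[|[|[|[|k]]]]].
have -> : k = (k - 3).+3 by lia.
rewrite fM_S3; last by lia.
have := IH (k - 3) ltac:(lia). lia.
Qed.

Lemma fM_mul a b : fM a * fM b <= fM (a + b).
Proof.
elim: (a + b) {-2}a {-2}b (leqnn (a + b)) => [|N IH] x y hxy.
  by case: x hxy => //; case: y.
case: (ltnP x 5) => hx; case: (ltnP y 5) => hy.
- by case: x hx {hxy} => [|[|[|[|[|x]]]]] //; case: y hy => [|[|[|[|[|y]]]]].
- have -> : y = (y - 3).+3 by lia.
  have -> : x + (y - 3).+3 = (x + (y - 3)).+3 by lia.
  rewrite !fM_S3; try lia.
  have := IH x (y - 3) ltac:(lia). lia.
- have -> : x = (x - 3).+3 by lia.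
  have -> : (x - 3).+3 + y = ((x - 3) + y).+3 by lia.
  rewrite !fM_S3; try lia.
  have := IH (x - 3) y ltac:(lia). lia.
- have -> : x = (x - 3).+3 by lia.
  have -> : (x - 3).+3 + y = ((x - 3) + y).+3 by lia.
  rewrite !fM_S3; try lia.
  have := IH (x - 3) y ltac:(lia). lia.
Qed.

Lemma fM_34 j : fM (3 * j + 4) = 4 * 3 ^ j.
Proof.
elim: j => [|j IH] //.
have -> : 3 * j.+1 + 4 = (3 * j + 4).+3 by lia.
rewrite fM_S3 ?IH ?expnS; lia.
Qed.
Lemma abel_bound (T : finType) m (S : {set T}) (A : {group {perm T}}) :
  #|S| <= m -> abelian A -> {in A, forall a, perm_on S a} -> #|A| <= fM #|S|.
Proof.
elim: m S A => [|m IH] S A hS abA onA.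
  have S0 : S = set0 by apply/eqP; rewrite -cards_eq0; lia.
  rewrite S0 cards0 /=.
  have : A \subset [1 {perm T}]%g.
    apply/subsetP => a aA; rewrite inE; apply/eqP/permP => x; rewrite perm1.
    apply/eqP; apply/negPn/negP => hx.
    have := onA a aA; rewrite S0 => /subsetP /(_ x); rewrite inE => /(_ hx).
    by rewrite inE.
  by move/subset_leq_card; rewrite cards1.
case: (set_0Vmem S) => [S0|[x xS]].
  by rewrite S0 cards0 in hS; apply: IH => //; rewrite S0 cards0.
set O := orbit 'P A x.
have OS : O \subset S.
  apply/subsetP => y /orbitP [a aA <-] /=; by rewrite perm_closed ?onA.
have xO : x \in O by apply: orbit_refl.
set H := 'C_A[x | 'P]%G.
have onH : {in H, forall a, perm_on (S :\: O) a}.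
  move=> a; rewrite inE => /andP [aA /astab1P /= ax].
  apply/subsetP => y; rewrite inE => hy; rewrite inE; apply/andP; split.
    apply/negP => /orbitP [b bA] /= hb; move/eqP: hy; apply.
    rewrite -hb -permM.
    have -> : (b * a = a * b)%g by apply: (centsP abA).
    by rewrite permM -[a x]/(aperm x a) ax.
  by have := onA a aA => /subsetP; apply.
have hHS : #|S :\: O| <= m.
  have : #|S :\: O| < #|S| by apply: proper_card; apply/properP; split;
    [apply: subsetDl | exists x => //; rewrite inE xO].
  lia.
have abH : abelian H by apply: abelianS abA; apply: subsetIl.
have := IH _ H hHS abH onH.
have cS : #|S| = #|O| + #|S :\: O|.
  by rewrite cardsD (setIidPr OS); have := subset_leq_card OS; lia.
have := card_orbit_stab 'P A x; rewrite -/O => <- hH.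
rewrite cS; apply: leq_trans (fM_mul _ _).
by apply: leq_mul => //; apply: fM_ge.
Qed.
Lemma card_bigcup_le (I T : finType) (P : pred I) (F : I -> {set T}) :
  #|\bigcup_(i | P i) F i| <= \sum_(i | P i) #|F i|.
Proof.
apply: (big_ind2 (fun (A : {set T}) n => #|A| <= n)).
- by rewrite cards0.
- move=> A1 n1 A2 n2 h1 h2; apply: leq_trans (leq_card_setU A1 A2) _; lia.
- by [].
Qed.

Lemma leq_expb a b e : a <= b -> a ^ e <= b ^ e.
Proof. by move=> h; elim: e => // e IH; rewrite !expnS leq_mul. Qed.

Lemma upper l n :
  #|commuting_tuples l n| <= #|{group {perm 'I_n}}| * fM n ^ l.
Proof.
pose F (G : {group {perm 'I_n}}) := [set f : {ffun 'I_l -> {perm 'I_n}} | f \in ffun_on G].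
have sub : commuting_tuples l n \subset \bigcup_(G : {group {perm 'I_n}} | abelian G) F G.
  apply/subsetP => f; rewrite inE => /forallP hf.
  apply/bigcupP; exists <<[set f j | j : 'I_l]>>%G.
    rewrite /= abelian_gen; apply/centsP => a /imsetP [j _ ->] b /imsetP [k _ ->].
    by have /forallP /(_ k) /eqP := hf j.
  rewrite inE; apply/ffun_onP => j; apply: mem_gen; exact: imset_f.
apply: leq_trans (subset_leq_card sub) _.
apply: leq_trans (card_bigcup_le _ _) _.
have h : forall G : {group {perm 'I_n}}, abelian G -> #|F G| <= fM n ^ l.
  move=> G abG; rewrite /F cardsE card_ffun_on card_ord.
  apply: leq_expb.
  have := @abel_bound _ n [set: 'I_n] G; rewrite cardsT card_ord; apply => //.
  move=> a _; apply/subsetP => y _; exact: in_setT.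
apply: (@leq_trans (\sum_(G : {group {perm 'I_n}} | abelian G) fM n ^ l)).
  by apply: leq_sum => G abG; apply: h.
rewrite sum_nat_const; apply: leq_mul => //; exact: max_card.
Qed.
Section Rot.
Variable m : nat.
Definition rotp (i : 'I_m.+1) : {perm 'I_m.+1} := perm (@GRing.addIr _ i).
Lemma rotpE i x : rotp i x = (x + i)%R.
Proof. by rewrite permE. Qed.
End Rot.

Lemma lower_cyc l m : m.+1 ^ l <= #|commuting_tuples l m.+1|.
Proof.
pose Fm (g : {ffun 'I_l -> 'I_m.+1}) := [ffun j => rotp (g j)].
have inj : injective Fm.
  move=> g1 g2 /ffunP h; apply/ffunP => j; have := h j; rewrite !ffunE => /permP /(_ 0%R).
  by rewrite !rotpE !GRing.add0r.
have : [set Fm g | g in [set: {ffun 'I_l -> 'I_m.+1}]] \subset commuting_tuples l m.+1.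
  apply/subsetP => f /imsetP [g _ ->]; rewrite inE; apply/forallP => j; apply/forallP => k.
  apply/eqP/permP => x; rewrite !permM !ffunE !rotpE.
  by rewrite -!GRing.addrA [(g k + g j)%R]GRing.addrC.
move/subset_leq_card; rewrite card_imset // cardsT card_ffun !card_ord //.
Qed.

Section Sum.
Variables a b : nat.
Definition smap (p : {perm 'I_a}) (q : {perm 'I_b}) (u : 'I_a + 'I_b) : 'I_a + 'I_b :=
  match u with inl y => inl (p y) | inr z => inr (q z) end.
Lemma smap_inj p q : injective (smap p q).
Proof. by case=> [y|z] [y'|z'] //= [] /perm_inj ->. Qed.
Definition spf p q (x : 'I_(a + b)) : 'I_(a + b) := unsplit (smap p q (split x)).
Lemma spf_inj p q : injective (spf p q).
Proof.
move=> x1 x2 /(can_inj unsplitK) /smap_inj /(can_inj splitK) //.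
Qed.
Definition sp p q : {perm 'I_(a + b)} := perm (@spf_inj p q).
Lemma spM p q p' q' : (sp p q * sp p' q')%g = sp (p * p')%g (q * q')%g.
Proof.
apply/permP => x; rewrite !permM !permE /spf unsplitK.
by case: (split x) => y /=; rewrite permM.
Qed.
Lemma sp_inj p q p' q' : sp p q = sp p' q' -> p = p' /\ q = q'.
Proof.
move=> h; split; apply/permP => y.
  have := congr1 (fun s : {perm _} => split (s (unsplit (inl y)))) h.
  rewrite /= !permE /spf (unsplitK (inl y)) /= => /(congr1 (@unsplit _ _)).
  by rewrite !splitK => /(congr1 val) /= /val_inj.
have := congr1 (fun s : {perm _} => split (s (unsplit (inr y)))) h.
rewrite /= !permE /spf (unsplitK (inr y)) /= => /(congr1 (@unsplit _ _)).
by rewrite !splitK => /(congr1 val) /= /addnI /val_inj.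
Qed.
End Sum.

Lemma lower_add l a b :
  #|commuting_tuples l a| * #|commuting_tuples l b| <= #|commuting_tuples l (a + b)|.
Proof.
pose Fm (fg : {ffun 'I_l -> {perm 'I_a}} * {ffun 'I_l -> {perm 'I_b}}) :=
  [ffun j => sp (fg.1 j) (fg.2 j)].
have inj : injective Fm.
  move=> [f1 g1] [f2 g2] /ffunP h.
  have H j := sp_inj (etrans (esym (ffunE _ j)) (etrans (h j) (ffunE _ j))).
  by congr pair; apply/ffunP => j; case: (H j).
have : [set Fm fg | fg in setX (commuting_tuples l a) (commuting_tuples l b)]
   \subset commuting_tuples l (a + b).
  apply/subsetP => F /imsetP [[f g]]; rewrite inE /= => /andP [].
  rewrite !inE => /forallP hf /forallP hg ->.
  apply/forallP => j; apply/forallP => k; rewrite !ffunE !spM.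
  have /forallP /(_ k) /eqP -> := hf j.
  by have /forallP /(_ k) /eqP -> := hg j.
by move/subset_leq_card; rewrite card_imset // cardsX.
Qed.

Lemma lower_pos l n : 1 <= #|commuting_tuples l n|.
Proof.
rewrite card_gt0; apply/set0Pn; exists [ffun=> 1%g]; rewrite inE.
by apply/forallP => j; apply/forallP => k; rewrite !ffunE.
Qed.

Lemma lower3 l k : 3 ^ (k * l) <= #|commuting_tuples l (3 * k)|.
Proof.
elim: k => [|k IH]; first by rewrite mul0n expn0 lower_pos.
have -> : 3 * k.+1 = 3 + 3 * k by rewrite mulnS.
apply: leq_trans (lower_add _ _ _); rewrite mulSn expnD.
exact: leq_mul (lower_cyc l 2) IH.
Qed.

Lemma lower32 l k : 2 ^ l * 3 ^ (k * l) <= #|commuting_tuples l (3 * k + 2)|.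
Proof.
rewrite -[3 * k + 2]/(3 * k + 1.+1).
apply: leq_trans (lower_add _ _ _); rewrite mulnC.
exact: leq_mul (lower3 l k) (lower_cyc l 1).
Qed.
Lemma growth l : (l + 8) * 16 ^ l <= 8 * 18 ^ l.
Proof.
elim: l => // l IH; rewrite !expnS.
have : 16 * ((l + 8) * 16 ^ l) <= 18 * (8 * 18 ^ l) by rewrite leq_mul.
nia.
Qed.

Lemma key_nat j l :
  8 * (#|{group {perm 'I_(3 * j.+1).+1}}| ^ 2 * (3 * j.+1)`! * (3 * j.+1).+2`!) <= l ->
  #|commuting_tuples l (3 * j.+1).+1| ^ 2 * (3 * j.+1)`! * (3 * j.+1).+2`!
  <= #|commuting_tuples l (3 * j.+1)| * #|commuting_tuples l (3 * j.+1).+2|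
     * (3 * j.+1).+1`! ^ 2.
Proof.
set m := 3 * j.+1.
set K := #|{group {perm 'I_m.+1}}|.
set c' := m`! * m.+2`!.
move=> hl.
have ha := upper l m.+1; rewrite -/K.
have e0 : fM m.+1 = 4 * 3 ^ j by rewrite -fM_34; congr fM; rewrite /m; lia.
rewrite e0 in ha.
have hb := lower3 l j.+1; rewrite -/m in hb.
have hd := lower32 l j.+1; rewrite -/m addn2 in hd.
set a := #|commuting_tuples l m.+1| in ha *.
set b := #|commuting_tuples l m| in hb *.
set d := #|commuting_tuples l m.+2| in hd *.
set X := 3 ^ (j * l).
have e3 : 3 ^ (j.+1 * l) = 3 ^ l * X by rewrite mulSn expnD.
rewrite e3 in hb hd.
have e4 : (4 * 3 ^ j) ^ l = 4 ^ l * X by rewrite expnMn -expnM.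
rewrite e4 -/K in ha.
have F1 : 1 <= m.+1`! ^ 2 by rewrite expn_gt0 fact_gt0.
have G : K ^ 2 * c' * (4 ^ l) ^ 2 <= 2 ^ l * (3 ^ l) ^ 2.
  have := growth l.
  have -> : 16 ^ l = (4 ^ l) ^ 2 by rewrite -expnM (mulnC l 2) expnM.
  have -> : 18 ^ l = 2 ^ l * (3 ^ l) ^ 2 by rewrite -expnM (mulnC l 2) expnM -expnMn.
  move=> hg; rewrite -(@leq_pmul2l 8) //; apply: leq_trans hg.
  rewrite mulnA; apply: leq_mul => //; move: hl; rewrite /c' !mulnA => hl; apply: leq_trans hl _; apply: leq_addr.
rewrite -mulnA -/c'.
apply: (@leq_trans ((K * 4 ^ l * X) ^ 2 * c')).
  by apply: leq_mul => //; apply: leq_expb; rewrite -mulnA.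
apply: (@leq_trans (b * d)); last by rewrite -{1}(muln1 (b * d)) leq_mul2l F1 orbT.
apply: (@leq_trans ((3 ^ l * X) * (2 ^ l * (3 ^ l * X)))); last exact: leq_mul.
have -> : (K * 4 ^ l * X) ^ 2 * c' = (K ^ 2 * c' * (4 ^ l) ^ 2) * X ^ 2 by ring.
have -> : 3 ^ l * X * (2 ^ l * (3 ^ l * X)) = (2 ^ l * (3 ^ l) ^ 2) * X ^ 2 by ring.
by rewrite leq_mul2r G orbT.
Qed.
Local Open Scope ring_scope.

Lemma Delta_le0 j l :
  (8 * (#|{group {perm 'I_(3 * j.+1).+1}}| ^ 2 * (3 * j.+1)`! * (3 * j.+1).+2`!) <= l)%N ->
  Delta l (3 * j.+1).+1 <= 0.
Proof.
move=> /key_nat.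
set m := (3 * j.+1)%N.
rewrite /Delta -[(m.+1).-1]/m /Ncomm !card_Sn.
set a := #|commuting_tuples l m.+1|.
set b := #|commuting_tuples l m|.
set d := #|commuting_tuples l m.+2|.
move=> h.
have hF0 : (0 : rat) < (m.+1)`!%:R by rewrite ltr0n fact_gt0.
have hF1 : (0 : rat) < m`!%:R by rewrite ltr0n fact_gt0.
have hF2 : (0 : rat) < (m.+2)`!%:R by rewrite ltr0n fact_gt0.
move: h hF0 hF1 hF2; generalize (m.+1)`! m`! (m.+2)`! a b d.
move=> F0 F1 F2 {}a {}b {}d h hF0 hF1 hF2.
have -> : (a%:R / F0%:R) ^+ 2 - b%:R / F1%:R * (d%:R / F2%:R)
   = ((a ^ 2 * F1 * F2)%N%:R - (b * d * F0 ^ 2)%N%:R)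
     / (F0%:R ^+ 2 * F1%:R * F2%:R) :> rat.
  rewrite !natrM; field.
  by rewrite !lt0r_neq0.
rewrite ler_pdivrMr; last by rewrite !mulr_gt0 // exprn_gt0.
by rewrite mul0r subr_le0 ler_nat.
Qed.

Theorem corollary1p6 (n0 : nat -> nat) :
  (forall l : nat, inS l ->
     forall n : nat, (1 <= n)%N -> (n0 l <= n)%N -> 0 < Delta l n) ->
  (forall m : nat, exists l : nat, (m <= l)%N /\ inS l) ->
  forall B : nat, exists l : nat, inS l /\ (B < n0 l)%N.
Proof.
move=> hn0 hS B.
pose m := (3 * B.+1)%N.
have [l [hl Sl]] := hS (8 * (#|{group {perm 'I_m.+1}}| ^ 2 * m`! * m.+2`!))%N.
exists l; split => //.
case: (leqP (n0 l) B) => // hle; exfalso.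
have hD := Delta_le0 hl.
have hBm : (B <= m.+1)%N by rewrite /m; lia.
have := hn0 l Sl m.+1 (ltn0Sn _) (leq_trans hle hBm).
by rewrite ltNge hD.
Qed.
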